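(* Fix $m\in\mathbb N$ and $r\ge2$, and let $(A_{m,r},B_{m,r})$, together with the level-$(r-1)$ pairs $(A^{(j)},B^{(j)})$ and index $i$ used in its construction, be drawn from $I_{m,r}$ as described in the context, where the parameter $\epsilon$ at each level of the construction is chosen sufficiently small as a function of $m$ and the level. Then, almost surely, the following are equivalent: (1) $\mathrm{conv}(A_{m,r})\cap\mathrm{conv}(B_{m,r})=\emptyset$; (2) $A^{(i)}\cap B^{(i)}=\emptyset$; (3) $A_{m,r}\cap B_{m,r}=\emptyset$.
   Context: The random pair $I_{m,r}=(A_{m,r},B_{m,r})$ of finite subsets of $\mathbb R^2$ is defined recursively. For $r=1$: $A_{m,1}=\{(0,0)\}$ and $B_{m,1}$ is uniformly either $\{(0,0)\}$ or $\emptyset$. For $r>1$: let $p_1,\dots,p_m$ be $m$ evenly spaced points on the part of the unit circle in the open positive quadrant $\{(x,y):x>0,y>0\}$; let $\epsilon>0$ be a parameter; let $U_j$ be the rotation matrix mapping the $y$-axis direction $e_2$ to $p_j$ and $e_1$ to a unit vector $p_j^\perp$ orthogonal to $p_j$; let $T_j(v)=U_j\begin{pmatrix}-\epsilon&0\\0&-\epsilon^2\end{pmatrix}v+p_j$. Draw $(A^{(1)},B^{(1)}),\dots,(A^{(m)},B^{(m)})$ i.i.d. from $I_{m,r-1}$ and $i$ uniform in $[m]$ independently, and set $A_{m,r}=\bigcup_{j=1}^mT_j(B^{(j)})$ and $B_{m,r}=T_i(A^{(i)})$. $\mathrm{conv}$ denotes convex hull. *)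

(* Defs.v *)
From HB Require Import structures.
From mathcomp Require Import all_boot all_order all_algebra.
From mathcomp Require Import boolp classical_sets reals trigo.
Set Implicit Arguments. Unset Strict Implicit. Unset Printing Implicit Defensive.
Import Order.TTheory GRing.Theory Num.Theory.
Local Open Scope ring_scope.
Local Open Scope classical_set_scope.

Section Defs.
Variable R : realType.

Definition arc_pt (m : nat) (j : 'I_m) : R * R :=
  let th := pi * (j.+1)%:R / (2 * (m.+1)%:R) in (cos th, sin th).

(* T_j(v) = U_j diag(-e, -e^2) v + p_j, where U_j is the rotation with
   U_j e2 = p_j and U_j e1 = p_j^perp = (p_y, -p_x). *)
Definition Tmap (m : nat) (e : R) (j : 'I_m) (v : R * R) : R * R :=
  let p := arc_pt j in
  let a := - e * v.1 in
  let b := - e ^+ 2 * v.2 in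
  (a * p.2 + b * p.1 + p.1, - a * p.1 + b * p.2 + p.2).

Definition level_A (m : nat) (e : R) (F : 'I_m -> set (R * R) * set (R * R))
  : set (R * R) :=
  [set x | exists j : 'I_m, exists y, (F j).2 y /\ x = Tmap e j y].

Definition level_B (m : nat) (e : R) (F : 'I_m -> set (R * R) * set (R * R))
  (i : 'I_m) : set (R * R) :=
  [set x | exists y, (F i).1 y /\ x = Tmap e i y].

(* realizable m eps r A B : (A,B) is in the support of I_{m,r}, where eps k
   is the parameter epsilon used at level k of the construction.
   (The distribution is finite and every realization has positive
   probability, so "almost surely" = "for every realization".) *)
Fixpoint realizable (m : nat) (eps : nat -> R) (r : nat)
  (A B : set (R * R)) {struct r} : Prop :=
  match r with
  | 0 => False
  | 1 => A = [set (0, 0)] /\ (B = [set (0, 0)] \/ B = set0)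
  | k.+1 =>
      exists (F : 'I_m -> set (R * R) * set (R * R)) (i : 'I_m),
        (forall j, realizable m eps k (F j).1 (F j).2) /\
        A = level_A (eps k.+1) F /\ B = level_B (eps k.+1) F i
  end.

Definition conv (S : set (R * R)) : set (R * R) :=
  [set x | exists (n : nat) (w : 'I_n -> R) (p : 'I_n -> R * R),
     (forall k, 0 <= w k) /\ \sum_(k < n) w k = 1 /\ (forall k, S (p k)) /\
     x = (\sum_(k < n) w k * (p k).1, \sum_(k < n) w k * (p k).2)].

End Defs.

(* Main.v *)
Require Import Defs.
From HB Require Import structures.
From mathcomp Require Import all_boot all_order all_algebra.
From mathcomp Require Import boolp classical_sets reals trigo.
From mathcomp Require Import ring lra.
Import Order.TTheory GRing.Theory Num.Theory.
Local Open Scope ring_scope.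
Local Open Scope classical_set_scope.
Lemma theta_bounds (R : realType) (m : nat) (j : 'I_m) :
  (0 : R) < (pi : R) * (j.+1)%:R / (2 * (m.+1)%:R) < (pi : R) / 2.
Proof.
have hp := @pi_gt0 R.
have hj : (j.+1 < m.+1)%N by rewrite ltnS ltn_ord.
have hj' : (j.+1)%:R < (m.+1)%:R :> R by rewrite ltr_nat.
have h0 : 0 < (j.+1)%:R :> R by rewrite ltr0n.
apply/andP; split.
  by apply: divr_gt0; [apply: mulr_gt0|apply: mulr_gt0; rewrite ?ltr0n].
rewrite ltr_pdivrMr; last by apply: mulr_gt0; rewrite ?ltr0n.
have -> : (pi : R) / 2 * (2 * (m.+1)%:R) = pi * (m.+1)%:R.
  by rewrite mulrA divfK // pnatr_eq0.
by rewrite ltr_pM2l.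
Qed.

Lemma arc_unit (R : realType) m (j : 'I_m) :
  (arc_pt R j).1 ^+ 2 + (arc_pt R j).2 ^+ 2 = 1.
Proof. exact: cos2Dsin2. Qed.

Lemma arc_abs (R : realType) m (j : 'I_m) :
  `|(arc_pt R j).1| <= 1 /\ `|(arc_pt R j).2| <= 1.
Proof. by split; [exact: cos_max | exact: sin_max]. Qed.

Lemma arc_pos2 (R : realType) m (j : 'I_m) : 0 < (arc_pt R j).2.
Proof.
rewrite /arc_pt /=; apply: sin_gt0_pi.
have /andP[h1 h2] := theta_bounds R _ j.
rewrite h1 /=; apply: (lt_trans h2).
by rewrite ltr_pdivrMr // ltr_pMr ?pi_gt0 // ltr1n.
Qed.

Lemma arc_dot (R : realType) m (i j : 'I_m) : i != j ->
  (arc_pt R i).1 * (arc_pt R j).1 + (arc_pt R i).2 * (arc_pt R j).2 < 1.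
Proof.
move=> hij; rewrite /arc_pt /= -cosB.
set a := (pi : R) * _ / _; set b := (pi : R) * _ / _.
have /andP[a0 a1] := theta_bounds R _ i.
have /andP[b0 b1] := theta_bounds R _ j.
rewrite -cos_norm -cos0.
have hp := @pi_gt0 R.
have habs : `|a - b| <= pi.
  rewrite (le_trans (ler_normB _ _)) // !gtr0_norm //.
  by rewrite [X in _ <= X](splitr pi) lerD // ltW.
rewrite ltr_cos ?in_itv /= ?lexx ?normr_ge0 ?habs ?(ltW hp) //.
rewrite normr_gt0 subr_eq0; apply/eqP => hab.
move: hab; rewrite /a /b => /mulIf.
have hD : (2 * (m.+1)%:R : R)^-1 != 0 by rewrite invr_eq0 mulf_neq0 // pnatr_eq0.
move=> /(_ hD) /mulfI => /(_ (lt0r_neq0 hp)) /eqP.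
rewrite eqr_nat eqSS => /eqP /val_inj hij'.
by rewrite hij' eqxx in hij.
Qed.

Lemma finite_lb (R : realType) (I : finType) (f : I -> R) :
  (forall i, 0 < f i) -> exists s : R, 0 < s /\ s <= 1 /\ forall i, s <= f i.
Proof.
move=> hf; set S := \sum_i (f i)^-1.
have hS : 0 <= S by apply: sumr_ge0 => i _; rewrite invr_ge0 ltW.
have h1 : 0 < 1 + S by rewrite ltr_wpDr.
exists (1 + S)^-1; split; first by rewrite invr_gt0.
split; first by rewrite invf_le1 // lerDl.
move=> i; rewrite -[X in _ <= X]invrK lef_pV2 ?posrE ?invr_gt0 //.
rewrite -[X in X <= _]add0r lerD // /S (bigD1 i) //= lerDl.
by apply: sumr_ge0 => k _; rewrite invr_ge0 ltW.
Qed.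

Lemma Lid (R : realType) m (e u : R) (i : 'I_m) (v : R * R) :
  (e * u * (arc_pt R i).2 + (arc_pt R i).1) * (Tmap e i v).1 +
  (- (e * u * (arc_pt R i).1) + (arc_pt R i).2) * (Tmap e i v).2 =
  1 - e ^+ 2 * (v.2 + u * v.1).
Proof.
have h := arc_unit R _ i.
rewrite /Tmap; case: (arc_pt R i) h => p1 p2 /= h.
transitivity ((p1 ^+ 2 + p2 ^+ 2) * (1 - e ^+ 2 * (v.2 + u * v.1))).
  by ring.
by rewrite h mul1r.
Qed.

Lemma nmul (R : realType) (x y a b : R) : `|x| <= a -> `|y| <= b -> `|x * y| <= a * b.
Proof.
move=> hx hy; rewrite normrM ler_pM //.
Qed.
Arguments nmul {R x y a b}.

Lemma Tmap_bnd (R : realType) m (e : R) (j : 'I_m) (v : R * R) :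
  0 < e -> e <= 1/4 -> `|v.1| <= 2 -> `|v.2| <= 2 ->
  `|(Tmap e j v).1| <= 2 /\ `|(Tmap e j v).2| <= 2.
Proof.
move=> e0 e1 h1 h2; have [q1 q2] := arc_abs R _ j.
rewrite /Tmap; case: (arc_pt R j) q1 q2 => p1 p2 /= q1 q2.
have ha : `|- e * v.1| <= 1/2.
  rewrite normrM normrN (gtr0_norm e0).
  apply: (le_trans (ler_pM (ltW e0) (normr_ge0 _) e1 h1)); lra.
have hb : `|- e ^+ 2 * v.2| <= 1/8.
  rewrite normrM normrN (gtr0_norm (exprn_gt0 2 e0)).
  have he2 : e ^+ 2 <= 1/16.
    rewrite expr2; apply: (le_trans (ler_pM (ltW e0) (ltW e0) e1 e1)); lra.
  apply: (le_trans (ler_pM (exprn_ge0 2 (ltW e0)) (normr_ge0 _) he2 h2)); lra.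
have hn1 := nmul ha q2. have hn2 := nmul hb q1.
have hn3 := nmul ha q1. have hn4 := nmul hb q2.
split.
  rewrite (le_trans (ler_normD _ _)) // (le_trans (lerD (ler_normD _ _) q1)) //.
  by rewrite (le_trans (lerD (lerD hn1 hn2) (lexx 1))) //; lra.
rewrite (le_trans (ler_normD _ _)) // (le_trans (lerD (ler_normD _ _) q2)) //.
rewrite mulNr normrN.
by rewrite (le_trans (lerD (lerD hn3 hn4) (lexx 1))) //; lra.
Qed.

Lemma nsub (R : realType) (x1 y1 x2 y2 a1 b1 a2 b2 : R) :
  `|x1| <= a1 -> `|y1| <= b1 -> `|x2| <= a2 -> `|y2| <= b2 ->
  `|x1 * y1 - x2 * y2| <= a1 * b1 + a2 * b2.
Proof.
move=> h1 h2 h3 h4; rewrite (le_trans (ler_normB _ _)) //.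
by rewrite lerD // nmul.
Qed.
Arguments nsub {R x1 y1 x2 y2 a1 b1 a2 b2}.

Lemma nadd (R : realType) (x1 y1 x2 y2 a1 b1 a2 b2 : R) :
  `|x1| <= a1 -> `|y1| <= b1 -> `|x2| <= a2 -> `|y2| <= b2 ->
  `|x1 * y1 + x2 * y2| <= a1 * b1 + a2 * b2.
Proof.
move=> h1 h2 h3 h4; rewrite (le_trans (ler_normD _ _)) //.
by rewrite lerD // nmul.
Qed.
Arguments nadd {R x1 y1 x2 y2 a1 b1 a2 b2}.

Lemma nle (R : realType) (x b : R) : `|x| <= b -> x <= b.
Proof. exact: le_trans (ler_norm x). Qed.
Arguments nle {R x b}.

Lemma Lother (R : realType) m (e u c K g : R) (i j : 'I_m) (y : R * R) :
  (arc_pt R i).1 * (arc_pt R j).1 + (arc_pt R i).2 * (arc_pt R j).2 <= 1 - g ->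
  0 < e -> e <= 1/4 -> `|u| <= K -> `|c| <= K ->
  `|y.1| <= 2 -> `|y.2| <= 2 -> 8 * e + 5 * e * K < g ->
  (e * u * (arc_pt R i).2 + (arc_pt R i).1) * (Tmap e j y).1 +
  (- (e * u * (arc_pt R i).1) + (arc_pt R i).2) * (Tmap e j y).2 < 1 - e ^+ 2 * c.
Proof.
move=> hd e0 e1 hu hc hy1 hy2 hg.
have [t1 t2] := Tmap_bnd _ _ _ j _ e0 e1 hy1 hy2.
have [a1 a2] := arc_abs R _ i. have [b1 b2] := arc_abs R _ j.
move: t1 t2; rewrite /Tmap.
case: (arc_pt R i) hd a1 a2 => p1 p2; case: (arc_pt R j) b1 b2 => q1 q2 /= b1 b2 hd a1 a2 t1 t2.
have K0 : 0 <= K by apply: le_trans hu.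
have heu : `|e * u| <= e * K by rewrite normrM (gtr0_norm e0) ler_pM // ltW.
have F1 := nle (nmul heu (nsub a2 t1 a1 t2)).
have hey : `|- e * y.1| <= e * 2 by rewrite normrM normrN (gtr0_norm e0) ler_pM // ltW.
have F2 := nle (nmul hey (nsub a1 b2 a2 b1)).
have he2 : e ^+ 2 <= e by rewrite expr2 ger_pMl //; lra.
have hey2 : `|- e ^+ 2 * y.2| <= e * 2.
  rewrite normrM normrN (gtr0_norm (exprn_gt0 2 e0)).
  by apply: (le_trans (ler_pM (exprn_ge0 2 (ltW e0)) (normr_ge0 _) he2 hy2)).
have F3 := nle (nmul hey2 (nadd a1 b1 a2 b2)).
have F4 : e ^+ 2 * c <= e * K.
  apply: nle; rewrite normrM (gtr0_norm (exprn_gt0 2 e0)).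
  exact: (ler_pM (exprn_ge0 2 (ltW e0)) (normr_ge0 _) he2 hc).
lra.
Qed.

Definition sep (R : realType) (A B : set (R * R)) (u c : R) : Prop :=
  (forall a, A a -> a.2 + u * a.1 < c) /\ (forall b, B b -> c < b.2 + u * b.1).

Definition bnd (R : realType) (S : set (R * R)) : Prop :=
  forall x, S x -> `|x.1| <= 2 /\ `|x.2| <= 2.
Arguments sep {R}. Arguments bnd {R}.

Lemma divconv (R : realType) (w1 w2 x1 x2 : R) : 0 < w2 ->
  x2 + w1 / w2 * x1 = (w1 * x1 + w2 * x2) / w2.
Proof. by move=> h; field; rewrite lt0r_neq0. Qed.

Lemma step (R : realType) m (s g e : R) (F : 'I_m -> set (R * R) * set (R * R))
    (i : 'I_m) (u c : R) :
  0 < s -> s <= 1 -> 0 < g -> g <= 1 ->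
  (forall j : 'I_m, s <= (arc_pt R j).2) ->
  (forall i j : 'I_m, i != j ->
     (arc_pt R i).1 * (arc_pt R j).1 + (arc_pt R i).2 * (arc_pt R j).2 <= 1 - g) ->
  0 < e -> e <= g * s ^+ 2 / 100 ->
  (forall j, bnd (F j).1 /\ bnd (F j).2) ->
  `|u| <= 4 / s -> `|c| <= 4 / s -> sep (F i).1 (F i).2 u c ->
  exists u' c', `|u'| <= 4 / s /\ `|c'| <= 4 / s /\
    sep (level_A e F) (level_B e F i) u' c'.
Proof.
move=> s0 s1 g0 g1 hs hd e0 e1 hF hu hc [sA sB].
set K := 4 / s in hu hc *.
have K0 : 0 <= K by rewrite /K divr_ge0 // ltW.
have eK : e * K <= g * s / 25.
  rewrite /K mulrA ler_pdivrMr //.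
  have : g * s ^+ 2 <= g * s by rewrite expr2 mulrA ler_piMr // mulr_ge0 // ltW.
  nra.
have s2 : s ^+ 2 <= 1 by rewrite expr_le1 // ltW.
have s20 : 0 <= s ^+ 2 by rewrite exprn_ge0 // ltW.
have e14 : e <= 1/4.
  have : g * s ^+ 2 <= 1 by rewrite -(mulr1 1) ler_pM // ltW.
  lra.
have gs : g * s <= 1 by rewrite -(mulr1 1); exact: (ler_pM (ltW g0) (ltW s0) g1 s1).
have e1' : e <= g / 100.
  have : g * s ^+ 2 <= g by rewrite ler_piMr // ltW.
  lra.
have hg : 8 * e + 5 * e * K < g.
  have : g * s <= g by rewrite ler_piMr // ltW.
  lra.
set p1 := (arc_pt R i).1; set p2 := (arc_pt R i).2.
have [a1 a2] := arc_abs R _ i.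
set w1 := e * u * p2 + p1; set w2 := - (e * u * p1) + p2.
have heu : `|e * u| <= e * K by rewrite normrM (gtr0_norm e0) ler_pM // ltW.
have hw2 : s / 2 <= w2.
  have := nle (nmul heu a1).
  have : g * s <= s by rewrite ler_piMl // ltW.
  have := hs i. rewrite /w2 -/p2. lra.
have w2p : 0 < w2 by apply: lt_le_trans hw2; rewrite divr_gt0.
have hKs : K * s = 4 by rewrite /K divfK // lt0r_neq0.
have hw1 : `|w1| <= 2.
  rewrite /w1 (le_trans (ler_normD _ _)) //.
  have := nmul heu a2. have : g * s <= s by rewrite ler_piMl // ltW.
  lra.
have he2 : e ^+ 2 <= e by rewrite expr2 ger_pMl //; lra.
have hd2 : `|1 - e ^+ 2 * c| <= 2.
  rewrite (le_trans (ler_normB _ _)) // normr1.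
  have : `|e ^+ 2 * c| <= e * K.
    rewrite normrM (gtr0_norm (exprn_gt0 2 e0)).
    exact: (ler_pM (exprn_ge0 2 (ltW e0)) (normr_ge0 _) he2 hc).
  have : g * s <= s by rewrite ler_piMl // ltW.
  lra.
have hbound : forall z : R, `|z| <= 2 -> `|z / w2| <= K.
  move=> z hz; rewrite normrM normfV (gtr0_norm w2p) ler_pdivrMr //.
  apply: (le_trans hz); have : K * (s / 2) <= K * w2 by rewrite (ler_wpM2l K0 hw2).
  lra.
exists (w1 / w2), ((1 - e ^+ 2 * c) / w2); split; first exact: hbound.
split; first exact: hbound.
have w2ip : 0 < w2^-1 by rewrite invr_gt0.
have conv : forall x : R * R, (x.2 + w1 / w2 * x.1 < (1 - e ^+ 2 * c) / w2) =
   (w1 * x.1 + w2 * x.2 < 1 - e ^+ 2 * c).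
  by move=> x; rewrite (divconv _ _ _ _ _ w2p) (ltr_pM2r w2ip).
have conv' : forall x : R * R, ((1 - e ^+ 2 * c) / w2 < x.2 + w1 / w2 * x.1) =
   (1 - e ^+ 2 * c < w1 * x.1 + w2 * x.2).
  by move=> x; rewrite (divconv _ _ _ _ _ w2p) (ltr_pM2r w2ip).
have e2p : 0 < e ^+ 2 by rewrite exprn_gt0.
split.
  move=> x [j [y [hy ->]]]; rewrite conv /w1 /w2 /p1 /p2.
  have [hb1 hb2] := (hF j).2 y hy.
  have [ej|hij] := eqVneq j i.
    subst j; rewrite Lid; have := sB y hy; nra.
  apply: (Lother _ _ _ _ _ K g) => //; first by apply: hd; rewrite eq_sym.
move=> x [y [hy ->]]; rewrite conv' /w1 /w2 /p1 /p2 Lid.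
have := sA y hy; nra.
Qed.

Lemma conv_lt (R : realType) (S : set (R * R)) (a b c : R) (x : R * R) :
  (forall p, S p -> a * p.1 + b * p.2 < c) -> conv S x -> a * x.1 + b * x.2 < c.
Proof.
move=> h [n [w [p [w0 [w1 [hp ->]]]]]] /=.
have -> : a * (\sum_(k < n) w k * (p k).1) + b * (\sum_(k < n) w k * (p k).2) =
    \sum_(k < n) w k * (a * (p k).1 + b * (p k).2).
  by rewrite !mulr_sumr -big_split; apply: eq_bigr => k _ /=; ring.
have [k0 hk0] : exists k, 0 < w k.
  case: (boolP [exists k, 0 < w k]) => [/existsP//|/existsPn hn].
  exfalso; move: w1; rewrite big1 => [/eqP|k _]; first by rewrite eq_sym oner_eq0.
  by apply/eqP; rewrite eq_le w0 andbT leNgt (negbTE (hn k)).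
rewrite -subr_gt0.
have -> : c - \sum_(k < n) w k * (a * (p k).1 + b * (p k).2) =
    \sum_(k < n) w k * (c - (a * (p k).1 + b * (p k).2)).
  rewrite -[X in X - _]mul1r -w1 mulr_suml -sumrB; apply: eq_bigr => k _; ring.
rewrite (bigD1 k0) //=; apply: ltr_pwDl.
  by rewrite mulr_gt0 // subr_gt0 h.
by apply: sumr_ge0 => k _; rewrite mulr_ge0 // subr_ge0 ltW // h.
Qed.

Lemma sep_conv (R : realType) (A B : set (R * R)) (u c : R) :
  sep A B u c -> conv A `&` conv B = set0.
Proof.
move=> [hA hB]; apply/seteqP; split => // x [xa xb].
have : u * x.1 + 1 * x.2 < c.
  by apply: (conv_lt _ _ _ _ _ _ _ xa) => p /hA; rewrite mul1r addrC.
have : - u * x.1 + -1 * x.2 < - c.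
  by apply: (conv_lt _ _ _ _ _ _ _ xb) => p /hB; rewrite !mulNr mul1r -opprD ltrN2 addrC.
lra.
Qed.

Lemma sub_conv (R : realType) (S : set (R * R)) : S `<=` conv S.
Proof.
move=> x hx; exists 1%N, (fun _ => 1), (fun _ => x); split => //.
rewrite big_ord1; split => //; split => //.
by rewrite !big_ord1 !mul1r; case: x {hx}.
Qed.

Lemma inter_lift (R : realType) m (e : R) (F : 'I_m -> set (R * R) * set (R * R)) (i : 'I_m) :
  level_A e F `&` level_B e F i = set0 -> (F i).1 `&` (F i).2 = set0.
Proof.
move=> h; apply/seteqP; split => // y [y1 y2].
have : (level_A e F `&` level_B e F i) (Tmap e i y).
  by split; [exists i, y | exists y].
by rewrite h.
Qed.

Lemma level_props (R : realType) m (eps : nat -> R) (s g : R) :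
  0 < s -> s <= 1 -> 0 < g -> g <= 1 ->
  (forall j : 'I_m, s <= (arc_pt R j).2) ->
  (forall i j : 'I_m, i != j ->
     (arc_pt R i).1 * (arc_pt R j).1 + (arc_pt R i).2 * (arc_pt R j).2 <= 1 - g) ->
  (forall k, 0 < eps k <= g * s ^+ 2 / 100) ->
  forall k A B, realizable m eps k A B ->
  bnd A /\ bnd B /\ (A `&` B = set0 ->
    exists u c, `|u| <= 4 / s /\ `|c| <= 4 / s /\ sep A B u c).
Proof.
move=> s0 s1 g0 g1 hs hd he.
have e14 : forall k, 0 < eps k /\ eps k <= 1/4.
  move=> k; have /andP[a b] := he k; split => //.
  have : g * s ^+ 2 <= 1.
    have s2 : s ^+ 2 <= 1 by rewrite expr_le1 // ltW.
    by rewrite -(mulr1 1); exact: (ler_pM (ltW g0) (exprn_ge0 2 (ltW s0)) g1 s2).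
  lra.
have K1 : 1 <= 4 / s by rewrite ler_pdivlMr //; lra.
elim=> [|k IH] A B //.
case: k IH => [_|k IH].
  move=> [-> hB]; have b0 : bnd [set ((0 : R), (0 : R))] by move=> x ->; rewrite normr0; lra.
  split => //; split; first by case: hB => -> // x.
  case: hB => ->.
    by move/seteqP => [/(_ (0, 0)) h _]; exfalso; apply: h.
  move=> _; exists 0, 1; rewrite normr0 normr1; split; first lra.
  split => //; split => // a ->; rewrite /= mulr0 addr0; lra.
move=> [F [i [hF [-> ->]]]].
have hF' := fun j => IH _ _ (hF j).
have [e0 e1] := e14 k.+2.
have hb : forall j, bnd (F j).1 /\ bnd (F j).2.
  by move=> j; have [? [? _]] := hF' j.
split.
  move=> x [j [y [hy ->]]]; have [b1 b2] := (hb j).2 y hy.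
  exact: Tmap_bnd.
split.
  move=> x [y [hy ->]]; have [b1 b2] := (hb i).1 y hy.
  exact: Tmap_bnd.
move=> /inter_lift hi; have [_ [_ /(_ hi) [u [c [hu [hc hsep]]]]]] := hF' i.
have /andP[_ e2] := he k.+2.
exact: (step _ _ s g _ F i u c).
Qed.

Lemma consts (R : realType) m : exists s g : R,
  [/\ 0 < s, s <= 1, 0 < g, g <= 1 &
   (forall j : 'I_m, s <= (arc_pt R j).2) /\
   (forall i j : 'I_m, i != j ->
     (arc_pt R i).1 * (arc_pt R j).1 + (arc_pt R i).2 * (arc_pt R j).2 <= 1 - g)].
Proof.
have [s [s0 [s1 hs]]] := finite_lb R _ (fun j : 'I_m => (arc_pt R j).2) (arc_pos2 R m).
pose f := fun p : 'I_m * 'I_m => if p.1 == p.2 then 1 else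
   1 - ((arc_pt R p.1).1 * (arc_pt R p.2).1 + (arc_pt R p.1).2 * (arc_pt R p.2).2).
have fp : forall p, 0 < f p.
  move=> [i j]; rewrite /f /=; case: eqP => // /eqP hij.
  by rewrite subr_gt0 arc_dot.
have [g [g0 [g1 hg]]] := finite_lb R _ f fp.
exists s, g; split => //; split => // i j hij.
have := hg (i, j); rewrite /f /= (negbTE hij); lra.
Qed.

Theorem lemma9 (R : realType) (m : nat) (hm : (0 < m)%N) :
  exists eps0 : nat -> R, (forall k, 0 < eps0 k) /\
  forall eps : nat -> R, (forall k, 0 < eps k <= eps0 k) ->
  forall r : nat, (2 <= r)%N ->
  forall (F : 'I_m -> set (R * R) * set (R * R)) (i : 'I_m),
    (forall j, realizable m eps r.-1 (F j).1 (F j).2) ->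
    let A := level_A (eps r) F in
    let B := level_B (eps r) F i in
    (conv A `&` conv B = set0 <-> (F i).1 `&` (F i).2 = set0) /\
    ((F i).1 `&` (F i).2 = set0 <-> A `&` B = set0).
Proof.
have [s [g [s0 s1 g0 g1 [hs hd]]]] := consts R m.
exists (fun _ => g * s ^+ 2 / 100); split.
  by move=> _; rewrite divr_gt0 // mulr_gt0 // exprn_gt0.
move=> eps he r hr F i hF A B.
have hF' := fun j => level_props R m eps s g s0 s1 g0 g1 hs hd he _ _ _ (hF j).
have hb : forall j, bnd (F j).1 /\ bnd (F j).2.
  by move=> j; have [? [? _]] := hF' j.
have /andP[e0 e1] := he r.
have k21 : (F i).1 `&` (F i).2 = set0 -> conv A `&` conv B = set0.
  move=> /(proj2 (proj2 (hF' i))) [u [c [hu [hc hsep]]]].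
  have [u' [c' [_ [_ hs']]]] := step _ _ s g _ F i u c s0 s1 g0 g1 hs hd e0 e1 hb hu hc hsep.
  exact: sep_conv hs'.
have k13 : conv A `&` conv B = set0 -> A `&` B = set0.
  move=> h; apply/seteqP; split => // x [xa xb].
  have : (conv A `&` conv B) x by split; apply: sub_conv.
  by rewrite h.
have k32 : A `&` B = set0 -> (F i).1 `&` (F i).2 = set0 := @inter_lift _ _ _ _ _.
split; split => h.
- exact: k32 (k13 h).
- exact: k21 h.
- exact: k13 (k21 h).
- exact: k32 h.
Qed.
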